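(* Let $S\subset\mathbb{Z}_p$ be a set consisting of exactly $p$ points and let $\mu_S=\sum_{s\in S}\delta_s$, where $\delta_s$ is the Dirac measure at $s$. Then for $\xi\in\mathbb{Q}_p$, $\widehat{\mu_S}(\xi)=0$ if and only if $|(s-s')\xi|_p=p$ for all distinct $s,s'\in S$.
   Context: $\mathbb{Q}_p$ is the field of $p$-adic numbers ($p$ prime) with absolute value $|\cdot|_p$ and $\mathbb{Z}_p$ its ring of integers. For $x=\sum_{n\ge v}a_np^n$ ($a_n\in\{0,\dots,p-1\}$) its fractional part is $\{x\}=\sum_{n=v}^{-1}a_np^n$. Let $\chi(x)=e^{2\pi i\{x\}}$ and $\chi_y(x)=\chi(yx)$. The Fourier transform of a finite Borel measure $\mu$ on $\mathbb{Q}_p$ is $\widehat\mu(y)=\int_{\mathbb{Q}_p}\overline{\chi_y(x)}\,d\mu(x)$; in particular $\widehat{\mu_S}(\xi)=\sum_{s\in S}e^{-2\pi i\{s\xi\}}$. *)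

(* Defs.v *)
From Stdlib Require Import ClassicalEpsilon.
From mathcomp Require Import all_boot all_algebra all_classical all_reals all_analysis.
From mathcomp Require Import complex.
Import GRing.Theory Num.Theory.
Unset Printing Implicit Defensive.
Local Open Scope ring_scope.

(* p-adic integers Z_p as the projective limit of Z/p^n Z:                  *)
(* x : nat -> nat, where x n in [0, p^n) is the residue of x modulo p^n,   *)
(* and the residues are coherent.  Two coherent sequences are equal (as    *)
(* functions) iff they are the same p-adic integer.                         *)
Definition is_zp (p : nat) (x : nat -> nat) : Prop :=
  forall n : nat, (x n < p ^ n)%N /\ (x n.+1 %% p ^ n)%N = x n.

Definition zp_sub (p : nat) (x y : nat -> nat) : nat -> nat :=
  fun n => ((x n + (p ^ n - y n)) %% p ^ n)%N.
Definition zp_mul (p : nat) (x y : nat -> nat) : nat -> nat :=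
  fun n => ((x n * y n) %% p ^ n)%N.

Definition zp_val (x : nat -> nat) : nat :=
  match excluded_middle_informative (exists n : nat, x n.+1 != 0%N) with
  | left h => ex_minn h
  | right _ => 0%N
  end.

(* p-adic numbers: every xi in Q_p is p^(-qexp) * qunit with qunit in Z_p. *)
(* (Representations are not unique; all functions below depend only on    *)
(* the represented number.)                                                *)
Record QpRep := mkQp { qexp : nat; qunit : nat -> nat }.

Definition is_qp (p : nat) (xi : QpRep) : Prop := is_zp p (qunit xi).

Definition zq_mul (p : nat) (y : nat -> nat) (xi : QpRep) : QpRep :=
  mkQp (qexp xi) (zp_mul p y (qunit xi)).

(* fractional part {x} = sum_{n=v}^{-1} a_n p^n.  For x = p^(-k) u with u in
   Z_p this is (u mod p^k) / p^k, since the digits a_(-k) .. a_(-1) of x are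
   the base-p digits of u mod p^k. *)
Definition qp_frac (p : nat) (x : QpRep) : rat :=
  ((qunit x (qexp x))%:R) / ((p ^ qexp x)%N%:R).

(* p-adic absolute value |x|_p = p^(-v(x)); for x = p^(-k) u, v(x) = v(u) - k;
   |0|_p = 0. *)
Definition qp_abs (p : nat) (x : QpRep) : rat :=
  match excluded_middle_informative (exists n : nat, qunit x n.+1 != 0%N) with
  | left _ => (p%:R ^+ qexp x) / (p%:R ^+ zp_val (qunit x))
  | right _ => 0
  end.

Definition expi (R : realType) (t : R) : R[i] := (cos t +i* sin t)%C.
Definition chi (R : realType) (p : nat) (x : QpRep) : R[i] :=
  expi R (2 * pi * ratr (qp_frac p x)).

(* Fourier transform of mu_S = sum_{s in S} delta_s, S = {s_0,...,s_(p-1)}: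
   hat mu_S(xi) = sum_{s in S} conj (chi_xi (s)) = sum_s e^{-2 pi i {s xi}}. *)
Definition muS_hat (R : realType) (p : nat) (s : 'I_p -> nat -> nat)
    (xi : QpRep) : R[i] :=
  \sum_(i < p) (chi R p (zq_mul p (s i) xi))^*%C.

(* Main.v *)
Require Import Defs.
From mathcomp Require Import all_boot all_algebra all_classical all_reals all_analysis.
From mathcomp Require Import complex.
From mathcomp Require Import cyclotomic algC.
From mathcomp Require Import zify ring lra.
From Stdlib Require Import ClassicalEpsilon.
Import GRing.Theory Num.Theory.
Import mathcomp.order.order.Order.TTheory.
Local Open Scope ring_scope.

Definition Phiq (p M : nat) : {poly rat} := \sum_(t < p) 'X^(t * M).

Lemma Phiq_mul (p M : nat) : Phiq p M * ('X^M - 1) = 'X^(p * M) - 1.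
Proof.
rewrite mulrC mulnC exprM (subrX1 ('X^M)) /Phiq; congr (_ * _).
by apply: eq_bigr => t _; rewrite -exprM mulnC.
Qed.

Lemma horner_Phiq (F : numFieldType) p M (x : F) :
  (map_poly ratr (Phiq p M)).[x] = \sum_(t < p) (x ^+ M) ^+ t.
Proof.
rewrite /Phiq rmorph_sum horner_sum; apply: eq_bigr => t _.
by rewrite rmorphXn /= map_polyX hornerXn -exprM mulnC.
Qed.

Lemma sum_pow_eq0 (F : numFieldType) p (w : F) :
  w ^+ p = 1 -> w != 1 -> \sum_(t < p) w ^+ t = 0.
Proof.
move=> wp w1; have := subrX1 w p; rewrite wp subrr => /esym/eqP.
by rewrite mulf_eq0 subr_eq0 (negbTE w1) /= => /eqP.
Qed.

Local Notation pQtoC := (map_poly (ratr : rat -> algC)).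

Section Core.
Variables (p k : nat).
Hypothesis hp : prime p.
Let M := (p ^ k)%N.
Let N := (p ^ k.+1)%N.
Lemma NE : N = (p * M)%N. Proof. by rewrite /N expnS. Qed.
Lemma M_gt0 : (0 < M)%N. Proof. by rewrite expn_gt0 prime_gt0. Qed.
Lemma M_ltN : (M < N)%N. Proof. by rewrite /N /M ltn_exp2l ?prime_gt1. Qed.

Lemma size_Phiq : size (Phiq p M) = (N - M).+1.
Proof.
have h := Phiq_mul p M.
have nz1 : ('X^M - 1 : {poly rat}) != 0.
  by rewrite -size_poly_eq0 size_XnsubC ?M_gt0.
have nz0 : Phiq p M != 0.
  apply/eqP=> h0; move: h; rewrite h0 mul0r => /esym/eqP.
  by rewrite -size_poly_eq0 size_XnsubC // muln_gt0 prime_gt0 ?M_gt0.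
move: (congr1 (fun q : {poly rat} => size q) h) => /=; rewrite size_mul // !size_XnsubC ?M_gt0 //;
  last by rewrite muln_gt0 prime_gt0 ?M_gt0.
rewrite -NE => h2; move: h2 (M_ltN); move: (size _) => s; move: M N => a b; lia.
Qed.

Lemma monic_Phiq : Phiq p M \is monic.
Proof.
have h := congr1 lead_coef (Phiq_mul p M).
rewrite lead_coefM lead_coefXnsubC ?M_gt0 // lead_coefXnsubC in h;
  last by rewrite muln_gt0 prime_gt0 ?M_gt0.
by rewrite monicE -[lead_coef _]mulr1 h.
Qed.

Lemma Phiq_root (F : numFieldType) (x : F) : N.-primitive_root x ->
  root (map_poly ratr (Phiq p M)) x.
Proof.
move=> px; rewrite /root horner_Phiq sum_pow_eq0 //.
  by rewrite -exprM mulnC -NE prim_expr_order.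
by rewrite -(prim_order_dvd px) (gtnNdvd M_gt0 M_ltN).
Qed.

Lemma minpoly_Phiq (x : algC) : N.-primitive_root x ->
  pQtoC (Phiq p M) = cyclotomic x N /\
  forall q : {poly rat}, root (pQtoC q) x -> Phiq p M %| q.
Proof.
move=> px; have [p0 [Dp0 mon0] dv] := minCpolyP x.
have e : p0 = Phiq p M.
  have d : p0 %| Phiq p M by rewrite -dv Phiq_root.
  apply/eqP; rewrite -eqp_monic // ?monic_Phiq // -dvdp_size_eqp //.
  rewrite size_Phiq -(size_map_poly (ratr : {rmorphism rat -> algC})) -Dp0 (minCpoly_cyclotomic px).
  rewrite size_cyclotomic /N totient_pfactor //= expnS /M.
  have := prime_gt1 hp; have : (0 < p ^ k)%N by rewrite expn_gt0 prime_gt0.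
  move: (p ^ k)%N => m; case: p => // q _ _ /=; apply/eqP; lia.
split; last by move=> q; rewrite dv e.
by rewrite -e -Dp0 (minCpoly_cyclotomic px).
Qed.

Lemma Phiq_dvd (F : numFieldType) (z : F) (P : {poly rat}) :
  N.-primitive_root z -> (map_poly ratr P).[z] = 0 -> Phiq p M %| P.
Proof.
move=> pz Pz.
have ncop : ~~ coprimep (Phiq p M) P.
  apply/negP=> cop.
  have cop' : coprimep (map_poly (ratr : rat -> F) (Phiq p M)) (map_poly ratr P).
    by rewrite coprimep_map.
  by have := coprimep_root cop' (@Phiq_root F z pz); rewrite Pz eqxx.
have [z0 pz0] := C_prim_root_exists (ltn0Sn (N.-1)).
rewrite prednK ?expn_gt0 ?prime_gt0 // in pz0.
have [x [rx Px]] : exists x : algC, root (pQtoC (Phiq p M)) x /\ root (pQtoC P) x.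
  apply: contrapT => H; move/negP: ncop; apply; rewrite -(coprimep_map (ratr : {rmorphism rat -> algC})).
  apply/Pdiv.ClosedField.coprimepP => x rx; apply/negP => Px.
  by apply: H; exists x.
have [e1 _] := minpoly_Phiq z0 pz0.
have px : N.-primitive_root x by rewrite -(root_cyclotomic pz0) -e1.
by have [_ ->] := minpoly_Phiq x px.
Qed.
End Core.

Lemma sum1_ge (n : nat) (f : 'I_n -> rat) (a : 'I_n) :
  (forall i, 0 <= f i) -> f a <= \sum_i f i.
Proof.
move=> f0; rewrite (bigD1 a) //= lerDl; exact: sumr_ge0.
Qed.

Lemma sum2_ge (n : nat) (f : 'I_n -> rat) (a b : 'I_n) :
  (forall i, 0 <= f i) -> a != b -> f a + f b <= \sum_i f i.
Proof.
move=> f0 ab; rewrite (bigD1 a) //= (bigD1 b) 1?eq_sym //= addrA lerDl.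
exact: sumr_ge0.
Qed.

Section Core2.
Variables (p k : nat).
Hypothesis hp : prime p.
Let M := (p ^ k)%N.
Let N := (p ^ k.+1)%N.

Lemma coef_QPhi (Q : {poly rat}) r : (size Q <= M)%N -> (r < N)%N ->
  (Q * Phiq p M)`_r = Q`_(r %% M).
Proof.
move=> sQ rN.
have M0 : (0 < M)%N by rewrite expn_gt0 prime_gt0.
have qp : (r %/ M < p)%N by rewrite ltn_divLR // -NE.
rewrite /Phiq mulr_sumr coef_sum (bigD1 (Ordinal qp)) //= mulrC coefXnM.
have -> : (r < r %/ M * M)%N = false by rewrite ltnNge leq_trunc_div.
have -> : (r - r %/ M * M = r %% M)%N by rewrite {1}(divn_eq r M) addKn.
rewrite big1 ?addr0 //.
move=> t /= tq; rewrite mulrC coefXnM.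
case: ltnP => // le; apply: nth_default; apply: leq_trans sQ _.
have tq' : (t : nat) != (r %/ M)%N.
  by apply: contra tq => /eqP e; apply/eqP/val_inj.
have : (t < r %/ M)%N.
  rewrite ltn_neqAle tq' /=.
  by rewrite leq_divRL.
move=> lt; have h1 : ((t.+1) * M <= r)%N by rewrite -leq_divRL.
move: h1; rewrite mulSn; move: (t * M)%N => a; lia.
Qed.

Lemma core_fwd (F : numFieldType) (z : F) (b : 'I_p -> nat) :
  N.-primitive_root z -> (forall i, b i < N)%N ->
  \sum_(i < p) z ^+ b i = 0 ->
  forall i j, i != j -> (b i %% M = b j %% M)%N /\ b i != b j.
Proof.
move=> pz bN S0.
set P : {poly rat} := \sum_(i < p) 'X^(b i).
have PZ : (map_poly ratr P).[z] = 0.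
  rewrite -S0 /P rmorph_sum horner_sum; apply: eq_bigr => i _.
  by rewrite rmorphXn /= map_polyX hornerXn.
have [Q PE] := dvdpP _ _ (@Phiq_dvd p k hp F z P pz PZ).
have cP r : P`_r = \sum_(i < p) (r == b i)%:R.
  by rewrite /P coef_sum; apply: eq_bigr => i _; rewrite coefXn.
have M0 : (0 < M)%N by rewrite expn_gt0 prime_gt0.
have nzPhi : Phiq p M != 0 by apply: monic_neq0; apply: monic_Phiq.
have sP : (size P <= N)%N.
  apply/leq_sizeP => j jN; rewrite cP big1 // => i _.
  by case: eqP => // e; move: (bN i); rewrite -e ltnNge jN.
have pos0 : (0 < p)%N by rewrite prime_gt0.
have nzP : P != 0.
  apply/eqP => P0; have := cP (b (Ordinal pos0)); rewrite P0 coef0 => /esym/eqP.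
  rewrite (bigD1 (Ordinal pos0)) //= eqxx paddr_eq0 ?oner_eq0 //.
  by apply: sumr_ge0 => i _; rewrite ler0n.
have nzQ : Q != 0 by apply: contra nzP => /eqP Q0; rewrite PE Q0 mul0r.
have sQ : (size Q <= M)%N.
  move: sP; rewrite PE size_mul // (@size_Phiq p k hp).
  have := @M_ltN p k hp; rewrite -/M -/N; move: (size Q) M N => a c d; lia.
have cQ r : (r < N)%N -> P`_r = Q`_(r %% M) by move=> rN; rewrite PE coef_QPhi.
have Q1 : Q.[1] = 1.
  have : P.[1] = Q.[1] * (Phiq p M).[1] by rewrite PE hornerM.
  have -> : P.[1] = p%:R.
    rewrite /P horner_sum (eq_bigr (fun _ => 1)) ?sumr_const ?card_ord //.
    by move=> i _; rewrite hornerXn expr1n.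
  have -> : (Phiq p M).[1] = p%:R.
    rewrite /Phiq horner_sum (eq_bigr (fun _ => 1)) ?sumr_const ?card_ord //.
    by move=> i _; rewrite hornerXn expr1n.
  move/eqP; rewrite -subr_eq0 -{1}[p%:R]mul1r -mulrBl mulf_eq0 pnatr_eq0.
  by rewrite (gtn_eqF pos0) orbF subr_eq0 => /eqP <-.
have QS : Q.[1] = \sum_(m < M) Q`_m.
  by rewrite (horner_coef_wide _ sQ); apply: eq_bigr => m _; rewrite expr1n mulr1.
have Qge0 (m : 'I_M) : 0 <= Q`_m.
  rewrite -(modn_small (ltn_ord m)) -cQ; last exact: ltn_trans (ltn_ord m) (@M_ltN p k hp).
  by rewrite cP; apply: sumr_ge0 => i _; rewrite ler0n.
have Pb i : P`_(b i) = Q`_(Ordinal (ltn_pmod (b i) M0)) by rewrite cQ.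
move=> i j ij.
have Pbi : 1 <= P`_(b i).
  rewrite cP; apply: le_trans (@sum1_ge p (fun i' => ((b i == b i')%:R : rat)) i _) => /=; first by rewrite eqxx.
  by move=> ?; rewrite ler0n.
have Pbj : 1 <= P`_(b j).
  rewrite cP; apply: le_trans (@sum1_ge p (fun i' => ((b j == b i')%:R : rat)) j _) => /=; first by rewrite eqxx.
  by move=> ?; rewrite ler0n.
split.
  apply/eqP; apply: contraT => ne.
  have := @sum2_ge M _ (Ordinal (ltn_pmod (b i) M0)) (Ordinal (ltn_pmod (b j) M0)) Qge0 ne.
  rewrite -QS Q1 -!Pb => h.
  have : 1 + 1 <= (1 : rat) by apply: le_trans h; apply: lerD.
  by rewrite -[X in _ <= X]addr0 lerD2l ler10.
apply/negP => /eqP e.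
have : 1 + 1 <= P`_(b i).
  rewrite cP (le_trans _ (@sum2_ge p (fun i' => ((b i == b i')%:R : rat)) _ _ _ ij)) //=.
  by rewrite eqxx e eqxx.
move=> h; rewrite Pb in h; have := le_trans h (@sum1_ge M _ _ Qge0).
by rewrite -QS Q1 -[X in _ <= X]addr0 lerD2l ler10.
Qed.
End Core2.

Section Core3.
Variables (p k : nat).
Hypothesis hp : prime p.
Let M := (p ^ k)%N.
Let N := (p ^ k.+1)%N.

Lemma core_bwd (F : numFieldType) (z : F) (b : 'I_p -> nat) :
  N.-primitive_root z -> (forall i, b i < N)%N ->
  (forall i j, i != j -> (b i %% M = b j %% M)%N /\ b i != b j) ->
  \sum_(i < p) z ^+ b i = 0.
Proof.
move=> pz bN H.
have M0 : (0 < M)%N by rewrite expn_gt0 prime_gt0.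
have pos0 : (0 < p)%N by rewrite prime_gt0.
set c := (b (Ordinal pos0) %% M)%N.
have bc i : (b i %% M)%N = c.
  have [-> // | ne] := eqVneq i (Ordinal pos0).
  by have [] := H _ _ ne.
have hlt i : (b i %/ M < p)%N by rewrite ltn_divLR // -NE.
pose h i := Ordinal (hlt i).
have hinj : injective h.
  move=> i j /(congr1 val) /= e; apply/eqP; apply: contraT => ne.
  have [_ bij] := H _ _ ne; move: bij.
  by rewrite (divn_eq (b i) M) (divn_eq (b j) M) e !bc eqxx.
have -> : \sum_(i < p) z ^+ b i = z ^+ c * \sum_(i < p) (z ^+ M) ^+ h i.
  rewrite mulr_sumr; apply: eq_bigr => i _.
  by rewrite /= {1}(divn_eq (b i) M) bc exprD -exprM mulnC mulrC.
rewrite -(reindex_inj hinj (P := xpredT) (F := fun t : 'I_p => (z ^+ M) ^+ t)) /= sum_pow_eq0 ?mulr0 //.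
  by rewrite -exprM mulnC -NE prim_expr_order.
by rewrite -(prim_order_dvd pz) (gtnNdvd M0 (@M_ltN p k hp)).
Qed.
End Core3.

Section Trig.
Variable R : realType.
Local Notation ex := (expi R).

Lemma expiD (a b : R) : ex (a + b) = ex a * ex b.
Proof.
rewrite /expi; apply/eqP; rewrite eq_complex /= cosD sinD.
by rewrite !eqxx /= [sin a * _]mulrC addrC eqxx.
Qed.

Lemma expi0 : ex 0 = 1.
Proof. by rewrite /expi cos0 sin0. Qed.

Lemma expiMn (t : R) (n : nat) : ex (t *+ n) = ex t ^+ n.
Proof.
elim: n => [|n IH]; first by rewrite mulr0n expr0 expi0.
by rewrite mulrS expiD IH exprS.
Qed.

Lemma expi_eq1 (t : R) : ex t = 1 -> cos t = 1 /\ sin t = 0.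
Proof.
move/eqP; rewrite eq_complex /= => /andP[/eqP -> /eqP ->]; by [].
Qed.

Lemma expi_ne1 (t : R) : 0 < t < pi *+ 2 -> ex t != 1.
Proof.
move=> /andP[t0 t2]; apply/negP => /eqP /expi_eq1 [c1 s0].
have [tp | pt] := ltrP t pi.
  by have := @sin_gt0_pi R t; rewrite t0 tp s0 ltxx => /(_ isT).
have [e | ne] := eqVneq t pi.
  by move: c1; rewrite e cospi => h1; lra.
have h : 0 < t - pi < pi.
  rewrite subr_gt0 lt_neqAle eq_sym ne pt /= ltrBlDr.
  by rewrite -mulr2n.
have := sin_gt0_pi h; rewrite sinB cospi sinpi s0 mulr0 mul0r subr0.
by rewrite ltxx.
Qed.
End Trig.

Section Prim.
Variable R : realType.
Local Notation ex := (expi R).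

Lemma pi2_gt0 : (0 : R) < pi *+ 2.
Proof. by rewrite pmulrn_lgt0 ?pi_gt0. Qed.

Lemma zeta_pow (N m : nat) : (ex (pi *+ 2 / N%:R)) ^+ m = ex (pi *+ 2 * (m%:R / N%:R)).
Proof. rewrite -expiMn -mulr_natr; congr (ex _); rewrite mulrA; ring. Qed.

Lemma zeta_prim (N : nat) : (0 < N)%N -> N.-primitive_root (ex (pi *+ 2 / N%:R)).
Proof.
move=> N0; apply/andP; split => //; apply/forallP => i; rewrite unity_rootE.
have N0' : (0 : R) < N%:R by rewrite ltr0n.
have [e | ne] := eqVneq i.+1 N.
  have Nn0 : (N%:R : R) != 0 by rewrite pnatr_eq0 -lt0n.
  rewrite e eqb_id zeta_pow (divff Nn0) mulr1.
  by rewrite /expi cos2pi sin2pi.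
rewrite eqbF_neg zeta_pow; apply/expi_ne1.
have lt : (i.+1 < N)%N by rewrite ltn_neqAle ne ltn_ord.
rewrite mulr_gt0 ?pi2_gt0 ?divr_gt0 ?ltr0n //= gtr_pMr ?pi2_gt0 //.
by rewrite ltr_pdivrMr // mul1r ltr_nat.
Qed.
End Prim.

Lemma zp_coh p x : is_zp p x -> forall n m, (n <= m)%N -> (x m %% p ^ n)%N = x n.
Proof.
move=> hx n m; elim: m => [|m IH].
  by rewrite leqn0 => /eqP ->; rewrite modn_small //; case: (hx 0%N).
rewrite leq_eqVlt => /orP[/eqP <- | lt].
  by rewrite modn_small //; case: (hx n).
have [_ e] := hx m.
by rewrite -(IH lt) -e modn_dvdm // dvdn_exp2l.
Qed.
Arguments zp_coh {p x}.

Lemma w_eq0 p si sj u : is_zp p si -> is_zp p sj -> is_zp p u ->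
  forall n m, (n <= m)%N ->
  (zp_mul p (zp_sub p si sj) u n == 0)%N =
  (si m * u m == sj m * u m %[mod p ^ n])%N.
Proof.
move=> hsi hsj hu n m nm; rewrite /zp_mul /zp_sub.
have sjP : (sj n <= p ^ n)%N by case: (hsj n) => /ltnW.
have E : (sj n * u n + (p ^ n - sj n) * u n = p ^ n * u n)%N.
  by rewrite -mulnDl subnKC.
rewrite modnMml mulnDl.
transitivity ((si n * u n + (p ^ n - sj n) * u n)
   == sj n * u n + (p ^ n - sj n) * u n %[mod p ^ n])%N.
  by rewrite E modnMr.
rewrite eqn_modDr -(zp_coh hsi _ _ nm) -(zp_coh hsj _ _ nm) -(zp_coh hu _ _ nm).
by rewrite !modnMm.
Qed.
Arguments w_eq0 {p si sj u} _ _ _ {n m}.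

Lemma abs_char p (hp : prime p) k (w : nat -> nat) :
  w 0%N = 0%N -> (forall n n', (n' <= n)%N -> w n = 0%N -> w n' = 0%N) ->
  qp_abs p (mkQp k w) = p%:R <->
  exists k', k = k'.+1 /\ w k != 0%N /\ w k' = 0%N.
Proof.
move=> hw0 coh.
have pn0 : (p%:R : rat) != 0 by rewrite pnatr_eq0 -lt0n prime_gt0.
rewrite /qp_abs /=; case: excluded_middle_informative => [hex|hno]; last first.
  split; first by move=> /esym/eqP; rewrite (negbTE pn0).
  by move=> [k' [e [wk _]]]; exfalso; apply: hno; exists k'; rewrite -e.
rewrite /zp_val; case: excluded_middle_informative => [hex'|hno']; last first.
  by exfalso; apply: hno'.
case: ex_minnP => v wv minv; split.
  move=> h.
  have e : k = v.+1.
    move/(congr1 (fun t => t * p%:R ^+ v)): h; rewrite divfK ?expf_neq0 //.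
    rewrite -exprS -!natrX => /eqP; rewrite eqr_nat eqn_exp2l ?prime_gt1 //.
    by move/eqP.
  exists v; split => //; split; first by rewrite e.
  clear h; case: v wv minv e => [//|v'] wv minv e.
  by apply/eqP; apply: contraT => ne; have := minv v' ne; rewrite ltnn.
move=> [k' [-> [wk wk']]].
have vk : (v <= k')%N by apply: minv.
have ev : v = k'.
  apply/eqP; rewrite eqn_leq vk /=; apply: contraT; rewrite -ltnNge => lt.
  by move: wv; rewrite (coh k' v.+1 lt wk').
by rewrite ev exprS mulrK // unitfE expf_neq0.
Qed.

Lemma LHS_iff (R : realType) p (s : 'I_p -> nat -> nat) k u :
  muS_hat R p s (mkQp k u) = 0 <->
  \sum_(i < p) (expi R (pi *+ 2 / (p ^ k)%N%:R)) ^+ ((s i k * u k) %% p ^ k)%N = 0.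
Proof.
have chiE i : chi R p (zq_mul p (s i) (mkQp k u)) =
   (expi R (pi *+ 2 / (p ^ k)%N%:R)) ^+ ((s i k * u k) %% p ^ k)%N.
  rewrite /chi /qp_frac /= zeta_pow.
  by rewrite fmorph_div /= !ratr_nat mulr_natl.
rewrite /muS_hat.
rewrite -rmorph_sum.
under eq_bigr => i _ do rewrite chiE.
by split => [/eqP|/eqP]; rewrite ?fmorph_eq0 => /eqP // ->; rewrite rmorph0.
Qed.

Theorem lemma2p4 (R : realType) (p : nat) (hp : prime p)
    (s : 'I_p -> nat -> nat) (hs : forall i, is_zp p (s i))
    (hinj : injective s)
    (xi : QpRep) (hxi : is_qp p xi) :
  muS_hat R p s xi = 0 <->
  (forall i j : 'I_p, i != j ->
     qp_abs p (zq_mul p (zp_sub p (s i) (s j)) xi) = p%:R).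
Proof.
have p1 : (1 < p)%N := prime_gt1 hp.
have p0 : (0 < p)%N := prime_gt0 hp.
case: xi hxi => k u; rewrite /is_qp /= => hu.
rewrite LHS_iff.
have RHS i j : qp_abs p (zq_mul p (zp_sub p (s i) (s j)) (mkQp k u)) = p%:R <->
   exists k', k = k'.+1 /\ zp_mul p (zp_sub p (s i) (s j)) u k != 0%N /\
              zp_mul p (zp_sub p (s i) (s j)) u k' = 0%N.
  apply: abs_char => //; first by rewrite /zp_mul expn0 modn1.
  move=> n n' le /eqP; rewrite (w_eq0 (hs i) (hs j) hu (leqnn n)) => h.
  apply/eqP; rewrite (w_eq0 (hs i) (hs j) hu le).
  rewrite -(modn_dvdm (s i n * u n) (dvdn_exp2l p le)) (eqP h).
  by rewrite modn_dvdm // dvdn_exp2l.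
case: k RHS => [|k'] RHS.
  split.
    move=> S0; exfalso; move: S0.
    under eq_bigr => i _ do rewrite expn0 modn1 expr0.
    by rewrite sumr_const card_ord => /eqP; rewrite pnatr_eq0 (gtn_eqF p0).
  move=> H; have := H (Ordinal p0) (Ordinal p1) isT.
  by move/RHS => [k' [e _]].
set N := (p ^ k'.+1)%N.
pose b i := ((s i k'.+1 * u k'.+1) %% N)%N.
have pz : N.-primitive_root (expi R (pi *+ 2 / N%:R)).
  by apply: zeta_prim; rewrite expn_gt0 p0.
have bN i : (b i < N)%N by rewrite ltn_pmod // expn_gt0 p0.
have pair i j : ((b i %% p ^ k' = b j %% p ^ k')%N /\ b i != b j) <->
    qp_abs p (zq_mul p (zp_sub p (s i) (s j)) (mkQp k'.+1 u)) = p%:R.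
  have dv : (p ^ k' %| N)%N by rewrite dvdn_exp2l.
  rewrite RHS; split.
    move=> [e1 e2]; exists k'; split => //; split.
      by rewrite (w_eq0 (hs i) (hs j) hu (leqnn _)).
    apply/eqP; rewrite (w_eq0 (hs i) (hs j) hu (leqnSn k')).
    by move: e1; rewrite /b !modn_dvdm // => ->.
  move=> [k'' [/eqP]]; rewrite eqSS => /eqP <- [h1 /eqP h2].
  move: h1 h2; rewrite (w_eq0 (hs i) (hs j) hu (leqnn _)).
  rewrite (w_eq0 (hs i) (hs j) hu (leqnSn k')) => h1 h2.
  by split => //; rewrite /b !modn_dvdm // (eqP h2).
split.
  move=> S0 i j ij; apply/pair.
  exact: (@core_fwd p k' hp _ _ b pz bN S0).
move=> H; apply: (@core_bwd p k' hp _ _ b pz bN) => i j ij.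
exact/pair/H.
Qed.
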